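(* Let $\lambda>0$, $p\in(1,\infty)$, and let $X$ be a Banach space having a closed linear subspace $Y$ of finite codimension such that $Y$ has property $\lambda$-HFC$_{p,d}$ (resp. $\lambda$-HIC$_{p,d}$). Then for every $\varepsilon>0$, $X$ has property $(\lambda+\varepsilon)$-HFC$_{p,d}$ (resp. $(\lambda+\varepsilon)$-HIC$_{p,d}$).
   Context: For $\mathbb{M}\subset\mathbb{N}$ infinite and $k\in\mathbb{N}$, $[\mathbb{M}]^k=\{\overline{n}=(n_1,\dots,n_k)\in\mathbb{M}^k: n_1<\cdots<n_k\}$; $[\mathbb{N}]^\omega$ denotes the set of infinite subsets of $\mathbb{N}$. Set $I_k(\mathbb{M})=\{(\overline{n},\overline{m})\in[\mathbb{M}]^k\times[\mathbb{M}]^k: n_1<m_1<n_2<m_2<\cdots<n_k<m_k\}$ and, for $1\le j\le k$, $H_j(\mathbb{M})=\{(\overline{n},\overline{m})\in[\mathbb{M}]^k\times[\mathbb{M}]^k: n_i=m_i \text{ for all } i\neq j,\ n_j<m_j\}$. For a map $f:[\mathbb{N}]^k\to (X,d)$, $\operatorname{Lip}_j(f)=\sup_{(\overline{n},\overline{m})\in H_j(\mathbb{N})} d(f(\overline{n}),f(\overline{m}))$. A metric space $(X,d)$ has property $\lambda$-HFC$_{p,d}$ (resp. $\lambda$-HIC$_{p,d}$), for $\lambda>0$, $p\in(1,\infty)$, if for every $k\in\mathbb{N}$ and every bounded function $f:[\mathbb{N}]^k\to X$ there exists $\mathbb{M}\in[\mathbb{N}]^\omega$ such that $d(f(\overline{n}),f(\overline{m}))\le\lambda\left(\sum_{j=1}^k\operatorname{Lip}_j(f)^p\right)^{1/p}$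 for all $\overline{n},\overline{m}\in[\mathbb{M}]^k$ (resp. for all $(\overline{n},\overline{m})\in I_k(\mathbb{M})$). *)

(* Defs.v *)
From HB Require Import structures.
From mathcomp Require Import all_boot all_order all_algebra.
From mathcomp Require Import all_classical all_reals all_analysis.
Set Implicit Arguments. Unset Strict Implicit. Unset Printing Implicit Defensive.
Import Order.TTheory GRing.Theory Num.Theory.
Import numFieldNormedType.Exports.
Local Open Scope classical_set_scope.
Local Open Scope ring_scope.

(* An element of [M]^k is a strictly increasing map 'I_k -> nat with values in M. *)
Definition incr_tuple (k : nat) (n : 'I_k -> nat) : Prop :=
  forall i j : 'I_k, (i < j)%N -> (n i < n j)%N.

Definition in_tuples (M : set nat) (k : nat) (n : 'I_k -> nat) : Prop :=
  incr_tuple n /\ forall i : 'I_k, M (n i).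

Definition interlaced (M : set nat) (k : nat) (n m : 'I_k -> nat) : Prop :=
  in_tuples M n /\ in_tuples M m /\
  forall i : 'I_k, (n i < m i)%N /\
    (forall j : 'I_k, nat_of_ord j = (nat_of_ord i).+1 -> (m i < n j)%N).

Definition Hj (k : nat) (j : 'I_k) (n m : 'I_k -> nat) : Prop :=
  in_tuples setT n /\ in_tuples setT m /\
  (forall i : 'I_k, i != j -> n i = m i) /\ (n j < m j)%N.

Definition Lipj (R : realType) (X : normedModType R) (k : nat)
  (f : ('I_k -> nat) -> X) (j : 'I_k) : R :=
  sup [set r : R | exists n m, Hj j n m /\ r = `|f n - f m|].

(* A function
   [N]^k -> A is a function on k-tuples whose values on increasing tuples lie in A. *)
Definition has_HC (interl : bool) (R : realType) (X : normedModType R)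
  (p lam : R) (A : set X) : Prop :=
  forall (k : nat) (f : ('I_k -> nat) -> X),
    (forall n, in_tuples setT n -> A (f n)) ->
    (exists B : R, forall n, in_tuples setT n -> `|f n| <= B) ->
    exists M : set nat, infinite_set M /\
      forall n m : 'I_k -> nat,
        (if interl then interlaced M n m
         else in_tuples M n /\ in_tuples M m) ->
        `|f n - f m| <= lam * (\sum_(j < k) (Lipj f j) `^ p) `^ (p^-1).

Definition HFC := has_HC false.
Definition HIC := has_HC true.

Definition closed_subspace (R : realType) (X : normedModType R) (Y : set X) : Prop :=
  Y 0 /\ (forall x y, Y x -> Y y -> Y (x + y)) /\
  (forall (a : R) x, Y x -> Y (a *: x)) /\ closed Y.

Definition finite_codim (R : realType) (X : normedModType R) (Y : set X) : Prop :=
  exists (d : nat) (e : 'I_d -> X), forall x : X,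
    exists c : 'I_d -> R, Y (x - \sum_(i < d) c i *: e i).

(* Main.v *)
Require Import Defs.
From HB Require Import structures.
From mathcomp Require Import all_boot all_order all_algebra.
From mathcomp Require Import all_classical all_reals all_analysis.
From mathcomp Require Import zify ring lra.
Import Order.TTheory GRing.Theory Num.Theory.
Import numFieldNormedType.Exports.
Local Open Scope classical_set_scope.
Local Open Scope ring_scope.
Definition unb (M : set nat) := forall N, exists x, (N <= x)%N /\ M x.

Lemma unb_infinite M : unb M <-> infinite_set M.
Proof.
split.
- move=> uM /finite_seqP [s sE].
  have [x [Hx Mx]] := uM (\max_(y <- s) y).+1.
  have xs : x \in s by move: Mx; rewrite sE.
  have := @leq_bigmax_seq _ s xpredT (fun y => y) x xs isT.
  lia.
- move=> iM N; apply: contrapT => H; apply: iM.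
  apply: (sub_finite_set _ (finite_II N)) => x Mx /=.
  rewrite ltnNge; apply/negP => Nx; apply: H; by exists x.
Qed.

Definition good_seq (M : set nat) (s : seq nat) :=
  sorted ltn s /\ (forall x, x \in s -> M x).

Lemma ramsey_seq k : forall (M0 : set nat) (c : seq nat -> bool), unb M0 ->
  exists M b, M `<=` M0 /\ unb M /\
    forall s, size s = k -> good_seq M s -> c s = b.
Proof.
elim: k => [|k IH] M0 c uM0.
  exists M0, (c [::]); split => //; split => // -[|//] _ _ //.
pose St := {M : set nat | unb M}.
have step : forall S : St, exists t : nat * bool * St,
   (sval S) t.1.1 /\ sval t.2 `<=` sval S /\ (forall x, sval t.2 x -> (t.1.1 < x)%N) /\
   forall s, size s = k -> good_seq (sval t.2) s -> c (t.1.1 :: s) = t.1.2.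
  move=> [M uM] /=.
  have [a [_ Ma]] := uM 0%N.
  have uM' : unb [set x | M x /\ (a < x)%N].
    move=> N; have [x [Nx Mx]] := uM (maxn N a.+1).
    exists x; split; [lia | split => //; lia].
  have [M' [b [sub [uM'' H]]]] := IH _ (fun s => c (a :: s)) uM'.
  exists (a, b, exist _ M' uM'') => /=; split => //; split.
    by move=> x /sub [].
  by split => //; move=> x /sub [].
have [nx Hnx] := choice step.
pose S0 : St := exist _ M0 uM0.
pose Sq i := iter i (fun S => (nx S).2) S0.
pose a i := (nx (Sq i)).1.1.
pose bs i := (nx (Sq i)).1.2.
have F1 : forall i d, sval (Sq (i + d)%N) `<=` sval (Sq i).
  move=> i; elim=> [|d IHd]; first by rewrite addn0.
  rewrite addnS /=; move=> x /(proj1 (proj2 (Hnx (Sq (i + d)%N)))); exact: IHd.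
have F1' : forall i j, (i <= j)%N -> sval (Sq j) `<=` sval (Sq i).
  by move=> i j /subnKC <-; apply: F1.
have F2 : forall i, sval (Sq i) (a i) by move=> i; exact: (proj1 (Hnx (Sq i))).
have F3 : forall i x, sval (Sq i.+1) x -> (a i < x)%N.
  by move=> i x; exact: (proj1 (proj2 (proj2 (Hnx (Sq i))))).
have F4 : forall i j, (i < j)%N -> (a i < a j)%N.
  by move=> i j ij; apply: F3; apply: (F1' _ _ ij); apply: F2.
have F5 : forall i, (i <= a i)%N.
  elim=> [|i IHi] //; have := F4 i i.+1 (ltnSn i); lia.
have F6 : forall i j, (a i < a j)%N -> (i < j)%N.
  move=> i j aij; rewrite ltnNge; apply/negP; rewrite leq_eqVlt => /orP[/eqP E|/F4].
    by move: aij; rewrite E ltnn.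
  lia.
have [b0 ub] : exists b0, forall N, exists i, (N <= i)%N /\ bs i = b0.
  case: (EM (forall N, exists i, (N <= i)%N /\ bs i = true)) => H; first by exists true.
  exists false => N; move/existsNP: H => [N0 /forallNP HN0].
  exists (maxn N N0); split; first lia.
  case E: (bs (maxn N N0)) => //; exfalso; apply: (HN0 (maxn N N0)); split => //; lia.
exists [set x | exists i, bs i = b0 /\ x = a i], b0; split.
  move=> x [i [_ ->]]; apply: (F1' 0%N i (leq0n _)); exact: F2.
split.
  move=> N; have [i [Ni bi]] := ub N; exists (a i); split; last by exists i.
  have := F5 i; lia.
move=> [//|x s'] [sz] [srt Ms].
have [i [bi xa]] := Ms x (mem_head _ _).
rewrite -bi xa.
have := proj2 (proj2 (proj2 (Hnx (Sq i)))) s'; apply.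
  by case: sz.
move: srt; rewrite /= (path_sortedE ltn_trans) => /andP[/allP alls srt].
split => // y ys.
have [j [_ ya]] := Ms y ltac:(by rewrite inE ys orbT).
have xy := alls y ys; rewrite xa ya in xy.
have ij := F6 _ _ xy.
rewrite ya; apply: (F1' i.+1 j ij); exact: F2.
Qed.

Lemma in_tuples_sub k (M M' : set nat) (n : 'I_k -> nat) :
  M `<=` M' -> in_tuples M n -> in_tuples M' n.
Proof. by move=> s [h1 h2]; split => // i; apply: s. Qed.
Arguments in_tuples_sub {k M M' n}.

Lemma ramsey_tup k (M0 : set nat) (c : ('I_k -> nat) -> bool) : unb M0 ->
  exists M b, M `<=` M0 /\ unb M /\ forall n, in_tuples M n -> c n = b.
Proof.
move=> uM0.
have [M [b [sub [uM H]]]] := ramsey_seq k M0 (fun s : seq nat => c (fun i => nth 0%N s i)) uM0.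
exists M, b; split => //; split => // n [incn Mn].
have E : (fun i : 'I_k => nth 0%N (map n (enum 'I_k)) i) = n.
  apply: funext => i; rewrite (nth_map i); last by rewrite size_enum_ord.
  by rewrite nth_ord_enum.
rewrite -E; apply: H; first by rewrite size_map size_enum_ord.
split.
  apply/(sortedP 0%N) => i; rewrite size_map size_enum_ord => ik.
  have ik' : (i < k)%N by lia.
  rewrite (nth_map (Ordinal ik')) ?size_enum_ord // (nth_map (Ordinal ik')) ?size_enum_ord //.
  apply: incn; rewrite !nth_enum_ord //.
move=> x /mapP [i _ ->]; exact: Mn.
Qed.

Section RR.
Variable R : realType.

Lemma bisect k (t : ('I_k -> nat) -> R) (w : R) j : forall M0 a, unb M0 ->
  (forall n, in_tuples M0 n -> a <= t n <= a + w) ->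
  exists M a', M `<=` M0 /\ unb M /\
    forall n, in_tuples M n -> a' <= t n <= a' + w / 2 ^+ j.
Proof.
elim: j => [|j IH] M0 a uM0 H.
  exists M0, a; split => //; split => // n /H; by rewrite expr0 divr1.
have [M [a' [sub [uM H']]]] := IH M0 a uM0 H.
have [M' [b [sub' [uM' Hb]]]] := ramsey_tup _ _ (fun n : 'I_k -> nat => t n <= a' + w / 2 ^+ j.+1) uM.
have h : w / 2 ^+ j = w / 2 ^+ j.+1 + w / 2 ^+ j.+1.
  have h2 : (2 ^+ j : R) != 0 by rewrite expf_neq0.
  rewrite exprS; field; by rewrite h2.
exists M'; case: b Hb => Hb.
  exists a'; split; first by move=> x /sub'/sub.
  split => // n nM'.
  have /andP[h1 h3] := H' n (in_tuples_sub sub' nM').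
  by rewrite h1 /= Hb.
exists (a' + w / 2 ^+ j.+1); split; first by move=> x /sub'/sub.
split => // n nM'.
have /andP[h1 h3] := H' n (in_tuples_sub sub' nM').
have := Hb n nM' => /negbT; rewrite -ltNge => h4.
apply/andP; split; first exact: ltW.
by rewrite -addrA -h.
Qed.

Lemma ramsey_real k (M0 : set nat) (t : ('I_k -> nat) -> R) (B eta : R) :
  unb M0 -> 0 < eta ->
  (forall n, in_tuples M0 n -> `|t n| <= B) ->
  exists M, M `<=` M0 /\ unb M /\
    forall n m, in_tuples M n -> in_tuples M m -> `|t n - t m| <= eta.
Proof.
move=> uM0 eta0 HB.
pose w := 2 * `|B|.
have H0 : forall n, in_tuples M0 n -> - `|B| <= t n <= - `|B| + w.
  move=> n /HB; rewrite ler_norml /w => /andP[h1 h2].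
  have := ler_norm B; have := ler_normr B; lra.
pose j := Num.Def.archi_bound (w / eta).
have [M [a' [sub [uM Hm]]]] := bisect _ t w j _ _ uM0 H0.
exists M; split => //; split => // n m nM mM.
have w0 : 0 <= w by rewrite /w mulr_ge0.
have jb : w / eta < j%:R by apply: archi_boundP; rewrite divr_ge0 // ltW.
have jj : (j%:R : R) <= 2 ^+ j.
  rewrite -natrX ler_nat; apply: ltnW; exact: ltn_expl.
have p2 : (0 : R) < 2 ^+ j by rewrite exprn_gt0.
have weta : w / 2 ^+ j <= eta.
  rewrite ler_pdivrMr //.
  have : w < eta * 2 ^+ j.
    rewrite -ltr_pdivrMl //; rewrite mulrC; exact: (lt_le_trans jb jj).
  by move/ltW.
have /andP[h1 h2] := Hm n nM; have /andP[h3 h4] := Hm m mM.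
rewrite ler_norml; apply/andP; split; lra.
Qed.
End RR.

Section Geo.
Variables (R : realType) (X : normedModType R) (Y : set X).

Definition cl (A : set X) :=
  [set x | forall eps : R, 0 < eps -> exists a, A a /\ `|x - a| < eps].
Definition subsp (Z : set X) := Z 0 /\ (forall x y, Z x -> Z y -> Z (x + y)) /\
  (forall (a : R) x, Z x -> Z (a *: x)).

Lemma cl_sub A : A `<=` cl A.
Proof. by move=> x Ax eps e0; exists x; rewrite subrr normr0. Qed.

Lemma cl_mono A B : A `<=` B -> cl A `<=` cl B.
Proof. by move=> AB x H eps e0; have [a [Aa h]] := H eps e0; exists a; split => //; apply: AB. Qed.

Lemma cl_cl A : cl (cl A) `<=` cl A.
Proof.
move=> x H eps e0.
have [b [Hb h1]] := H (eps / 2) (divr_gt0 e0 (ltr0Sn _ 1)).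
have [a [Aa h2]] := Hb (eps / 2) (divr_gt0 e0 (ltr0Sn _ 1)).
exists a; split => //.
have -> : x - a = (x - b) + (b - a) by rewrite addrA subrK.
apply: (le_lt_trans (ler_normD _ _)); lra.
Qed.

Lemma closed_cl A : closed A -> cl A `<=` A.
Proof.
move=> cA x xA; apply: cA => B /nbhs_ballP [e e0 sB].
have [a [Aa xa]] := xA e e0; exists a; split => //; apply: sB.
by rewrite -ball_normE /ball_ /=.
Qed.

Lemma subsp_cl Z : subsp Z -> subsp (cl Z).
Proof.
move=> [Z0 [ZD ZZ]]; split; first exact: cl_sub.
split.
  move=> x y Hx Hy eps e0.
  have [a [Za h1]] := Hx (eps / 2) (divr_gt0 e0 (ltr0Sn _ 1)).
  have [b [Zb h2]] := Hy (eps / 2) (divr_gt0 e0 (ltr0Sn _ 1)).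
  exists (a + b); split; first exact: ZD.
  have -> : x + y - (a + b) = (x - a) + (y - b).
    by rewrite opprD addrACA.
  apply: (le_lt_trans (ler_normD _ _)); lra.
move=> c x Hx eps e0.
have c1 : 0 < `|c| + 1 by rewrite ltr_wpDl.
have [a [Za h1]] := Hx (eps / (`|c| + 1)) (divr_gt0 e0 c1).
exists (c *: a); split; first exact: ZZ.
rewrite -scalerBr normrZ.
have h3 : `|c| * `|x - a| <= (`|c| + 1) * `|x - a| by rewrite ler_wpM2r // lerDl.
apply: (le_lt_trans h3); rewrite mulrC -ltr_pdivlMr //.
Qed.

Definition lineZ (Z : set X) (e : X) := [set x | exists z t, Z z /\ x = z + t *: e].

Lemma subsp_line Z e : subsp Z -> subsp (lineZ Z e).
Proof.
move=> [Z0 [ZD ZZ]]; split; first by exists 0, 0; rewrite scale0r addr0.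
split.
  move=> x y [z1 [t1 [Z1 ->]]] [z2 [t2 [Z2 ->]]]; exists (z1 + z2), (t1 + t2).
  by split; [exact: ZD | rewrite scalerDl addrACA].
move=> a x [z [t [Zz ->]]]; exists (a *: z), (a * t).
by split; [exact: ZZ | rewrite scalerDr scalerA].
Qed.

Definition Good k (Z : set X) := forall (M0 : set nat) (F : ('I_k -> nat) -> X) (B d : R),
  unb M0 -> 0 < d ->
  (forall n, in_tuples M0 n -> Z (F n)) -> (forall n, in_tuples M0 n -> `|F n| <= B) ->
  exists M, M `<=` M0 /\ unb M /\ forall n m, in_tuples M n -> in_tuples M m ->
    exists y, Y y /\ `|F n - F m - y| <= d.

Lemma Good_mono k Z Z' : Z' `<=` Z -> Good k Z -> Good k Z'.
Proof.
move=> s G M0 F B d u d0 FZ FB; apply: (G M0 F B d u d0 _ FB).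
by move=> n /FZ /s.
Qed.

Lemma Good_Y k : subsp Y -> Good k Y.
Proof.
move=> [Y0 [YD YZ]] M0 F B d u d0 FY FB; exists M0; split => //; split => // n m nM mM.
exists (F n - F m); split; last by rewrite subrr normr0 ltW.
by apply: YD; [exact: FY | rewrite -scaleN1r; apply: YZ; exact: FY].
Qed.

Lemma sep Z e : cl Z `<=` Z -> ~ Z e ->
  exists r, 0 < r /\ forall z, Z z -> r <= `|e - z|.
Proof.
move=> cZ nZe; apply: contrapT => H; apply: nZe; apply: cZ => eps eps0.
apply: contrapT => H2; apply: H; exists eps; split => // z Zz.
rewrite leNgt; apply/negP => lt; apply: H2; by exists z.
Qed.

Lemma line_bound Z e r : subsp Z -> 0 < r -> (forall z, Z z -> r <= `|e - z|) ->
  forall z t, Z z -> `|t| * r <= `|z + t *: e|.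
Proof.
move=> [Z0 [ZD ZZ]] r0 Hr z t Zz.
have [->|t0] := eqVneq t 0; first by rewrite normr0 mul0r.
have -> : z + t *: e = t *: (e - (- t^-1) *: z).
  by rewrite scalerBr scalerA mulrN mulfV // scaleN1r opprK addrC.
rewrite normrZ ler_wpM2l //; apply: Hr; exact: ZZ.
Qed.


Lemma vec_id (x1 x2 z1 z2 y u v : X) :
  x1 - x2 - y = (x1 - z1 - u) - (x2 - z2 - v) + (z1 - z2 - y) + (u - v).
Proof.
rewrite !opprD !opprK !addrA.
rewrite [RHS](ACl (1*4*9*2*7*3*10*8*5*6*11)) /=.
by rewrite !(subrK, addrK).
Qed.

Lemma subKv' (a b : X) : b - (b - a) = a.
Proof. by rewrite opprB addrC subrK. Qed.

Lemma Good_step k Z e : subsp Z -> cl Z `<=` Z -> Good k Z -> Good k (cl (lineZ Z e)).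
Proof.
move=> sZ cZ GZ.
have [Z0 [ZD ZZ]] := sZ.
case: (EM (Z e)) => Ze.
  apply: (Good_mono _ _ _ _ GZ) => x H; apply: cZ; apply: (cl_mono (lineZ Z e)) H.
  move=> y [z [t [Zz ->]]]; apply: ZD => //; exact: ZZ.
have [r [r0 Hr]] := sep _ _ cZ Ze.
move=> M0 F B d uM0 d0 FZ FB.
pose e0 := d / 4.
have e00 : 0 < e0 by rewrite /e0 divr_gt0.
have : forall n, exists zt : X * R, in_tuples M0 n ->
    Z zt.1 /\ `|F n - zt.1 - zt.2 *: e| <= e0.
  move=> n; case: (EM (in_tuples M0 n)) => H; last by exists (0, 0).
  have [x [[z [t [Zz ->]]] lt]] := FZ n H e0 e00.
  exists (z, t) => _ /=; split => //; rewrite opprD addrA in lt; exact: ltW.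
move/choice => [zt Hzt].
pose z n := (zt n).1; pose t n := (zt n).2.
have tB : forall n, in_tuples M0 n -> `|t n| <= (B + e0) / r.
  move=> n nM; rewrite ler_pdivlMr //.
  apply: (le_trans (line_bound _ _ _ sZ r0 Hr (z n) (t n) (proj1 (Hzt n nM)))).
  have -> : z n + t n *: e = F n - (F n - z n - t n *: e).
    by rewrite -(addrA (F n) (- z n)) -(opprD (z n)) subKv'.
  apply: (le_trans (ler_normB _ _)); apply: lerD; first exact: FB.
  exact: (proj2 (Hzt n nM)).
pose eta := d / (4 * (`|e| + 1)).
have eta0 : 0 < eta by rewrite /eta divr_gt0 // mulr_gt0 // ltr_wpDl.
have [M1 [s1 [u1 H1]]] := ramsey_real _ _ _ t _ _ uM0 eta0 tB.
have Bz : forall n, in_tuples M1 n -> `|z n| <= B + e0 + (B + e0) / r * `|e|.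
  move=> n nM.
  have nM0 := in_tuples_sub s1 nM.
  have h1 := proj2 (Hzt n nM0).
  have -> : z n = F n - (F n - z n - t n *: e) - t n *: e.
    by rewrite -(addrA (F n) (- z n)) -(opprD (z n)) subKv' addrK.
  apply: (le_trans (ler_normB _ _)); rewrite normrZ.
  apply: lerD; last by apply: ler_wpM2r => //; exact: tB.
  apply: (le_trans (ler_normB _ _)); apply: lerD => //; exact: FB.
have [M [s2 [u2 H2]]] := GZ M1 z (B + e0 + (B + e0) / r * `|e|) e0 u1 e00
   (fun n nM => proj1 (Hzt n (in_tuples_sub s1 nM))) Bz.
exists M; split; first by move=> x /s2/s1.
split => // n m nM mM.
have [y [Yy hy]] := H2 n m nM mM; exists y; split => //.
have nM1 := in_tuples_sub s2 nM; have mM1 := in_tuples_sub s2 mM.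
have nM0 := in_tuples_sub s1 nM1; have mM0 := in_tuples_sub s1 mM1.
rewrite (vec_id (F n) (F m) (z n) (z m) y (t n *: e) (t m *: e)) -scalerBl.
have h1 := proj2 (Hzt n nM0); have h2 := proj2 (Hzt m mM0).
have h3 := H1 n m nM1 mM1.
have h4 : `|(t n - t m) *: e| <= eta * `|e| by rewrite normrZ ler_wpM2r.
have h5 : eta * `|e| <= d / 4.
  have e1 : `|e| + 1 != 0 by rewrite gt_eqF // ltr_wpDl.
  have -> : d / 4 = eta * (`|e| + 1) by rewrite /eta; field; rewrite e1.
  rewrite ler_wpM2l ?ltW //; lra.
apply: (le_trans (ler_normD _ _)); apply: (le_trans (lerD (ler_normD _ _) (lexx _))).
apply: (le_trans (lerD (lerD (ler_normB _ _) (lexx _)) (lexx _))).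
rewrite /e0 in h1 h2 hy; lra.
Qed.

Lemma span_good k : subsp Y -> cl Y `<=` Y -> forall d (e : 'I_d -> X),
  exists Z, subsp Z /\ cl Z `<=` Z /\ Good k Z /\
    forall y c, Y y -> Z (y + \sum_(i < d) c i *: e i).
Proof.
move=> sY cY; elim=> [|d IH] e.
  exists Y; split => //; split => //; split; first exact: Good_Y.
  by move=> y c Yy; rewrite big_ord0 addr0.
have [Z [sZ [cZ [GZ HZ]]]] := IH (fun i => e (widen_ord (leqnSn d) i)).
exists (cl (lineZ Z (e ord_max))); split; first exact: subsp_cl _ (subsp_line _ _ sZ).
split; first exact: cl_cl.
split; first exact: Good_step.
move=> y c Yy; rewrite big_ord_recr /= addrA; apply: cl_sub.
exists (y + \sum_(i < d) c (widen_ord (leqnSn d) i) *: e (widen_ord (leqnSn d) i)), (c ord_max).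
split => //; exact: (HZ y (fun i => c (widen_ord (leqnSn d) i)) Yy).
Qed.
End Geo.

Section Ineq.
Variable R : realType.
Variable p : R.
Hypothesis p1 : 1 < p.

Lemma powR_mono (x y : R) : 0 <= x -> x <= y -> x `^ p <= y `^ p.
Proof.
have P1 := p1.
move=> x0 xy; apply: (ge0_ler_powR (ltW (lt_trans ltr01 p1))); rewrite ?nnegrE //; lra.
Qed.

Lemma powR_le_id (x : R) : 0 <= x <= 1 -> x `^ p <= x.
Proof.
have P1 := p1.
move=> /andP[x0 x1]; have [->|xn0] := eqVneq x 0.
  by rewrite powR0 // gt_eqF //; lra.
apply: ge1r_powR; last lra.
by rewrite x1 andbT lt_neqAle eq_sym xn0.
Qed.

Lemma superadd (a b : R) : 0 <= a -> 0 <= b -> a `^ p + b `^ p <= (a + b) `^ p.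
Proof.
have P1 := p1.
move=> a0 b0; have [s0|spos] := eqVneq (a + b) 0.
  have a00 : a = 0 by lra.
  have b00 : b = 0 by lra.
  by rewrite a00 b00 addr0 powR0 ?addr0 // gt_eqF //; lra.
have sp : 0 < a + b by rewrite lt_neqAle eq_sym spos /=; lra.
have Ea : a `^ p = (a / (a + b)) `^ p * (a + b) `^ p.
  rewrite -powRM ?divfK ?gt_eqF //; last exact: ltW.
  by rewrite divr_ge0 // ltW.
have Eb : b `^ p = (b / (a + b)) `^ p * (a + b) `^ p.
  rewrite -powRM ?divfK ?gt_eqF //; last exact: ltW.
  by rewrite divr_ge0 // ltW.
rewrite Ea Eb -mulrDl -[X in _ <= X]mul1r ler_wpM2r ?powR_ge0 //.
have h1 : a / (a + b) <= 1 by rewrite ler_pdivrMr // mul1r; lra.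
have h2 : b / (a + b) <= 1 by rewrite ler_pdivrMr // mul1r; lra.
have q1 := powR_le_id (a / (a + b)) ltac:(by rewrite h1 divr_ge0 // ltW).
have q2 := powR_le_id (b / (a + b)) ltac:(by rewrite h2 divr_ge0 // ltW).
have : a / (a + b) + b / (a + b) = 1 by rewrite -mulrDl divff.
lra.
Qed.

Lemma sum_superadd k (v : 'I_k -> R) : (forall i, 0 <= v i) ->
  \sum_(i < k) v i `^ p <= (\sum_(i < k) v i) `^ p.
Proof.
have P1 := p1.
elim: k v => [|k IH] v v0; first by rewrite !big_ord0 powR_ge0.
rewrite !big_ord_recr /=.
apply: (le_trans _ (superadd _ _ (sumr_ge0 _ (fun i _ => v0 _)) (v0 ord_max))).
by rewrite lerD2r; apply: IH.
Qed.

Lemma term_bound (L c th : R) : 0 <= L -> 0 <= c -> 0 < th ->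
  (L + c) `^ p <= ((1 + th) * L) `^ p + ((1 + th^-1) * c) `^ p.
Proof.
have P1 := p1.
move=> L0 c0 th0.
have A : 0 <= ((1 + th) * L) `^ p by apply: powR_ge0.
have B : 0 <= ((1 + th^-1) * c) `^ p by apply: powR_ge0.
have [ct|tc] := lerP c (th * L).
  suff : (L + c) `^ p <= ((1 + th) * L) `^ p by lra.
  apply: powR_mono; lra.
suff : (L + c) `^ p <= ((1 + th^-1) * c) `^ p by lra.
apply: powR_mono; first lra.
have : L <= th^-1 * c.
  by rewrite mulrC ler_pdivlMr // mulrC; apply: ltW.
rewrite mulrDl mul1r; lra.
Qed.

Lemma main_ineq k (L : 'I_k -> R) (c th : R) : (forall j, 0 <= L j) -> 0 <= c -> 0 < th ->
  (\sum_(j < k) (L j + c) `^ p) `^ p^-1 <=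
  (1 + th) * (\sum_(j < k) L j `^ p) `^ p^-1 + k%:R * (1 + th^-1) * c.
Proof.
have P1 := p1.
move=> L0 c0 th0.
have p0 : 0 < p by lra.
set S := (\sum_(j < k) L j `^ p) `^ p^-1.
have S0 : 0 <= S by apply: powR_ge0.
have Sp : S `^ p = \sum_(j < k) L j `^ p.
  rewrite /S -powRrM mulVf ?gt_eqF // powRr1 //; apply: sumr_ge0 => j _; exact: powR_ge0.
have C0 : 0 <= k%:R * (1 + th^-1) * c by rewrite !mulr_ge0 // addr_ge0 // invr_ge0 ltW.
have th1 : 0 <= 1 + th^-1 by rewrite addr_ge0 // invr_ge0 ltW.
have H1 : \sum_(j < k) (L j + c) `^ p <=
   ((1 + th) * S) `^ p + (k%:R * (1 + th^-1) * c) `^ p.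
  have H1a : \sum_(j < k) (L j + c) `^ p <=
      \sum_(j < k) (((1 + th) * L j) `^ p + ((1 + th^-1) * c) `^ p).
    by apply: ler_sum => j _; exact: term_bound.
  have H1b : \sum_(j < k) (((1 + th) * L j) `^ p + ((1 + th^-1) * c) `^ p) =
      ((1 + th) * S) `^ p + \sum_(j < k) ((1 + th^-1) * c) `^ p.
    rewrite big_split /= [((1 + th) * S) `^ p]powRM; last first.
    - by [].
    - by rewrite addr_ge0 // ltW.
    rewrite Sp mulr_sumr; congr (_ + _).
    apply: eq_bigr => j _; rewrite powRM //; by rewrite addr_ge0 // ltW.
  have H1c : \sum_(j < k) ((1 + th^-1) * c) `^ p <= (k%:R * (1 + th^-1) * c) `^ p.
    have := sum_superadd _ (fun _ : 'I_k => (1 + th^-1) * c) (fun _ => mulr_ge0 th1 c0).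
    move=> h; apply: (le_trans h).
    by rewrite sumr_const card_ord -mulrA mulr_natl.
  rewrite H1b in H1a; apply: (le_trans H1a); by rewrite lerD2l.
have H2 := le_trans H1 (superadd _ _ _ C0).
have pi0 : 0 <= p^-1 by rewrite invr_ge0 ltW.
have := @ge0_ler_powR _ p^-1 pi0 _ _ _ _ (H2 _).
rewrite -powRrM mulfV ?gt_eqF // powRr1; last by rewrite addr_ge0 // mulr_ge0 // addr_ge0 // ltW.
apply.
- by rewrite nnegrE; apply: sumr_ge0 => j _; apply: powR_ge0.
- by rewrite nnegrE powR_ge0.
- by rewrite mulr_ge0 // addr_ge0 // ltW.
Qed.
End Ineq.

Section Main.
Variables (R : realType) (X : normedModType R).

Lemma Hj_ex k (j : 'I_k) : exists n m, Hj j n m.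
Proof.
exists (fun i : 'I_k => (2 * i)%N),
  (fun i : 'I_k => if i == j then (2 * i).+1 else (2 * i)%N).
split; first by split => // i i' ii'; lia.
split.
  split => // i i' ii'; case: (i == j); case: (i' == j); lia.
split; first by move=> i /negbTE ->.
rewrite eqxx; lia.
Qed.

Section Lip.
Variables (k : nat) (f : ('I_k -> nat) -> X) (B : R).
Hypothesis HB : forall n, in_tuples setT n -> `|f n| <= B.

Lemma Lip_ub j n m : Hj j n m -> `|f n - f m| <= Lipj f j.
Proof.
have HB' := HB.
move=> H.
have hub : has_ubound [set r : R | exists n m, Hj j n m /\ r = `|f n - f m|].
  exists (B + B) => y [n' [m' [[n't [m't _]] ->]]].
  apply: (le_trans (ler_normB _ _)); apply: lerD; exact: HB'.
rewrite /Lipj; apply: (ub_le_sup hub); by exists n, m.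
Qed.

Lemma Lip_ge0 j : 0 <= Lipj f j.
Proof.
have [n [m H]] := Hj_ex _ j.
exact: le_trans (normr_ge0 _) (Lip_ub j n m H).
Qed.

Lemma Lip_le j c : (forall n m, Hj j n m -> `|f n - f m| <= c) -> Lipj f j <= c.
Proof.
move=> H; apply: ge_sup.
  by have [n [m Hnm]] := Hj_ex _ j; exists `|f n - f m|, n, m.
by move=> y [n [m [Hnm ->]]]; exact: H.
Qed.
End Lip.

Lemma nh1 (k l i i' : nat) : (k - l <= i)%N -> (i < i')%N -> (k - l <= i')%N.
Proof. lia. Qed.
Lemma nh2 (k l : nat) : (l < k)%N -> (k - l.+1 < k)%N.
Proof. lia. Qed.
Lemma nh3 (k l i : nat) : i <> (k - l.+1)%N -> (l < k)%N -> (k - l <= i)%N = (k - l.+1 <= i)%N.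
Proof. move=> h1 h2; apply/idP/idP; lia. Qed.
Lemma nh4 (k l : nat) : (l < k)%N -> (k - l <= k - l.+1)%N = false.
Proof. move=> h; apply/negbTE; lia. Qed.

Lemma chain k (f : ('I_k -> nat) -> X) : (forall j n m, Hj j n m -> f n = f m) ->
  forall n w, in_tuples setT n -> in_tuples setT w ->
  (forall i i' : 'I_k, (n i < w i')%N) -> f n = f w.
Proof.
move=> Hf n w [nI _] [wI _] nw.
pose u l := fun i : 'I_k => if (k - l <= i)%N then w i else n i.
have uI : forall l, in_tuples setT (u l).
  move=> l; split => // i i' ii'; rewrite /u.
  case: ifP => h1; case: ifP => h2.
  - exact: wI.
  - by rewrite (nh1 _ _ _ _ h1 ii') in h2.
  - exact: nw.
  - exact: nI.
have step : forall l, (l < k)%N -> f (u l) = f (u l.+1).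
  move=> l lk.
  apply: (Hf (Ordinal (nh2 _ _ lk)) (u l) (u l.+1)).
  split; first exact: uI.
  split; first exact: uI.
  split.
    move=> i ij.
    have hi : (i : nat) <> (k - l.+1)%N.
      move=> E; move/eqP: ij; apply; exact: val_inj.
    rewrite /u. rewrite (nh3 _ _ _ hi lk). by [].
  rewrite /u.
  have -> : (k - l <= Ordinal (nh2 _ _ lk))%N = false by exact: nh4.
  have -> : (k - l.+1 <= Ordinal (nh2 _ _ lk))%N = true by exact: leqnn.
  exact: nw.
have u0 : u 0%N = n by apply: funext => i; rewrite /u subn0 leqNgt ltn_ord.
have uk : u k = w by apply: funext => i; rewrite /u subnn leq0n.
have H : forall l, (l <= k)%N -> f n = f (u l).
  elim=> [|l IH] lk; first by rewrite u0.
  rewrite (IH (ltnW lk)); exact: step.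
by rewrite (H k (leqnn k)) uk.
Qed.

Lemma enum_unb (M : set nat) : unb M -> exists phi : nat -> nat,
  (forall i, M (phi i)) /\ (forall i j, (i < j)%N -> (phi i < phi j)%N).
Proof.
move=> uM; have [g Hg] := choice uM.
pose phi := fix phi i := if i is i'.+1 then g (phi i').+1 else g 0%N.
exists phi; split; first by case=> [|i] /=; exact: (proj2 (Hg _)).
have st : forall i, (phi i < phi i.+1)%N by move=> i /=; case: (Hg (phi i).+1).
move=> i j ij; exact: (homo_ltn (r := fun a b => (a < b)%N) ltn_trans st ij).
Qed.

Definition HCrel (b : bool) (M : set nat) k (n m : 'I_k -> nat) :=
  if b then interlaced M n m else in_tuples M n /\ in_tuples M m.
Arguments HCrel b M {k} n m.

Lemma HCrel_tup b M k (n m : 'I_k -> nat) : HCrel b M n m -> in_tuples M n /\ in_tuples M m.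
Proof. by case: b => [[h1 [h2 _]]|]. Qed.
Arguments HCrel_tup {b M k n m}.

Lemma transfer b (phi : nat -> nat) (M2 : set nat) k (n m : 'I_k -> nat) :
  (forall i j, (i < j)%N -> (phi i < phi j)%N) ->
  HCrel b (phi @` M2) n m -> exists a a', n = (fun i => phi (a i)) /\
    m = (fun i => phi (a' i)) /\ HCrel b M2 a a'.
Proof.
move=> mono H.
have inv : forall x y, (phi x < phi y)%N -> (x < y)%N.
  move=> x y h; rewrite ltnNge; apply/negP; rewrite leq_eqVlt => /orP[/eqP E|/mono].
    by move: h; rewrite E ltnn.
  lia.
have pre : forall n' : 'I_k -> nat, in_tuples (phi @` M2) n' ->
    exists a, n' = (fun i => phi (a i)) /\ in_tuples M2 a.
  move=> n' [ninc nM].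
  have : forall i, exists x, M2 x /\ phi x = n' i by move=> i; have [x ? ?] := nM i; exists x.
  move/choice => [a Ha].
  have E : n' = (fun i => phi (a i)) by apply: funext => i; rewrite (proj2 (Ha i)).
  exists a; split => //; split; last by move=> i; exact: (proj1 (Ha i)).
  by move=> i j ij; apply: inv; have := ninc i j ij; rewrite E.
have [nt mt] := HCrel_tup H.
have [a [Ea aM]] := pre n nt; have [a' [Ea' aM']] := pre m mt.
exists a, a'; split => //; split => //.
move: H; rewrite /HCrel; case: b => // -[_ [_ H]].
split => //; split => // i; have [h1 h2] := H i; split.
  by apply: inv; move: h1; rewrite Ea Ea'.
by move=> j ij; apply: inv; move: (h2 j ij); rewrite Ea Ea'.
Qed.

End Main.

Arguments subsp {R X}.
Arguments cl {R X}.
Arguments closed_cl {R X A}.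
Arguments span_good {R X Y} k.
Arguments Lip_ge0 {R X k f B} HB j.
Arguments Lip_ub {R X k f B} HB j n m.
Arguments Lip_le {R X k f} j c.
Arguments HCrel b M {k} n m.
Arguments HCrel_tup {b M k n m}.
Arguments chain {R X k f} Hf {n w}.
Arguments enum_unb {M}.
Arguments transfer {b phi M2 k n m}.
Arguments main_ineq {R p} p1 {k L c th}.
Arguments powR_mono {R p} p1 {x y}.
Arguments subKv' {R X}.

Section Final.
Variables (R : realType) (X : normedModType R).

Lemma vid2 (a b c u v : X) : a - b = (u - v) + (a - c - u) - (b - c - v).
Proof.
rewrite !opprD !opprK !addrA.
rewrite [RHS](ACl (3*6*4*7*1*5*2*8)) /=.
by rewrite !(subrK, addrK).
Qed.

Lemma vid3 (a b c u v : X) : u - v = (a - b) - (a - c - u) + (b - c - v).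
Proof.
rewrite !opprD !opprK !addrA.
rewrite [RHS](ACl (5*8*1*3*2*6*4*7)) /=.
by rewrite !(subrK, addrK).
Qed.

Lemma main_gen (b : bool) (lam p : R) (Y : set X) : 0 < lam -> 1 < p ->
  closed_subspace Y -> finite_codim Y -> has_HC b p lam Y ->
  forall eps : R, 0 < eps -> has_HC b p (lam + eps) [set: X].
Proof.
move=> lam0 p1 [Y0 [YD [YZ cY]]] [d [e He]] HC eps eps0 k f _ [B HB].
have sY : subsp Y by split => //; split.
have clY : cl Y `<=` Y := closed_cl cY.
have [Z [_ [_ [GZ HZ]]]] := span_good k sY clY d e.
have Zall : forall x, Z x.
  move=> x; have [c Hc] := He x; have := HZ _ c Hc; by rewrite subrK.
have L0 : forall j, 0 <= Lipj f j := Lip_ge0 HB.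
have S0 : 0 <= (\sum_(j < k) Lipj f j `^ p) `^ p^-1 by apply: powR_ge0.
have p0 : 0 < p by lra.
have [Seq0|Spos] := eqVneq ((\sum_(j < k) Lipj f j `^ p) `^ p^-1) 0.
  exists setT; split; first by apply/unb_infinite => N; exists N.
  move=> n m Hnm; have [nt mt] := HCrel_tup (Hnm : HCrel b setT n m).
  have Lz : forall j, Lipj f j = 0.
    move=> j; apply: (@powR_eq0_eq0 _ _ p).
    apply: (psumr_eq0P (P := xpredT) (F := fun j => Lipj f j `^ p)) => //.
      by move=> i _; apply: powR_ge0.
    exact: (powR_eq0_eq0 Seq0).
  have Hf : forall j n m, Hj j n m -> f n = f m.
    move=> j n' m' H; apply/eqP; rewrite -subr_eq0 -normr_le0.
    by rewrite -(Lz j); apply: Lip_ub HB _ _ _ H.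
  pose K := \max_(i : 'I_k) (n i + m i)%N.
  pose w := fun i : 'I_k => (K + i).+1.
  have wt : in_tuples setT w by split => // i j ij; rewrite /w; lia.
  have Kb : forall i : 'I_k, (n i + m i <= K)%N.
    by move=> i; exact: (@leq_bigmax _ (fun i : 'I_k => (n i + m i)%N) i).
  have E1 := chain Hf nt wt (fun i i' => ltac:(have := Kb i; rewrite /w; lia)).
  have E2 := chain Hf mt wt (fun i i' => ltac:(have := Kb i; rewrite /w; lia)).
  by rewrite E1 E2 subrr normr0 Seq0 mulr0.
have Sp : 0 < (\sum_(j < k) Lipj f j `^ p) `^ p^-1 by rewrite lt_neqAle eq_sym Spos S0.
set S := (\sum_(j < k) Lipj f j `^ p) `^ p^-1 in Sp S0 *.
pose th := eps / (2 * lam).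
have th0 : 0 < th by rewrite divr_gt0 // mulr_gt0.
pose K := lam * k%:R * (1 + th^-1) + 1.
have K0 : 0 < K.
  have tinv : 0 <= 1 + th^-1 by rewrite addr_ge0 // invr_ge0 ltW.
  have : 0 <= lam * k%:R * (1 + th^-1) by rewrite mulr_ge0 // mulr_ge0 // ltW.
  rewrite /K; lra.
pose dl := eps * S / (4 * K).
have dl0 : 0 < dl by rewrite /dl !divr_gt0 ?mulr_gt0.
have uT : unb setT by move=> N; exists N.
have [M1 [_ [uM1 HM1]]] := GZ setT f B dl uT dl0 (fun n _ => Zall _) HB.
have [phi [phiM phimono]] := enum_unb uM1.
pose n0 := fun i : 'I_k => phi i.
have n0M : in_tuples M1 n0 by split => [i j ij|i]; [apply: phimono | apply: phiM].
have : forall n, exists y, Y y /\ (in_tuples M1 n -> `|f n - f n0 - y| <= dl).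
  move=> n; case: (EM (in_tuples M1 n)) => H; last by exists 0.
  have [y [Yy hy]] := HM1 n n0 H n0M; by exists y.
move/choice => [gY HgY].
have T1 : forall n : 'I_k -> nat, in_tuples setT n -> in_tuples M1 (fun i => phi (n i)).
  move=> n [ninc _]; split => [i j ij|i]; [apply: phimono; exact: ninc | exact: phiM].
have M1T : forall n : 'I_k -> nat, in_tuples M1 n -> in_tuples setT n.
  by move=> n nM; apply: (in_tuples_sub _ nM).
have g_le : forall n m, in_tuples M1 n -> in_tuples M1 m ->
    `|gY n - gY m| <= `|f n - f m| + 2 * dl.
  move=> n m nM mM; rewrite (vid3 (f n) (f m) (f n0) (gY n) (gY m)).
  have h1 := proj2 (HgY n) nM; have h2 := proj2 (HgY m) mM.
  apply: (le_trans (ler_normD _ _)); apply: (le_trans (lerD (ler_normB _ _) (lexx _))).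
  lra.
have f_le : forall n m, in_tuples M1 n -> in_tuples M1 m ->
    `|f n - f m| <= `|gY n - gY m| + 2 * dl.
  move=> n m nM mM; rewrite (vid2 (f n) (f m) (f n0) (gY n) (gY m)).
  have h1 := proj2 (HgY n) nM; have h2 := proj2 (HgY m) mM.
  apply: (le_trans (ler_normB _ _)); apply: (le_trans (lerD (ler_normD _ _) (lexx _))).
  lra.
pose h := fun n : 'I_k -> nat => gY (fun i => phi (n i)).
have hY : forall n, in_tuples setT n -> Y (h n) by move=> n _; exact: (proj1 (HgY _)).
have hB : forall n, in_tuples setT n -> `|h n| <= B + B + dl.
  move=> n nt; have pM := T1 n nt.
  have h1 := proj2 (HgY _) pM.
  rewrite /h -(subKv' (gY (fun i => phi (n i))) (f (fun i => phi (n i)) - f n0)).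
  apply: (le_trans (ler_normB _ _)); apply: lerD => //.
  apply: (le_trans (ler_normB _ _)); apply: lerD; apply: HB => //; exact: M1T.
have hLip : forall j, Lipj h j <= Lipj f j + 2 * dl.
  move=> j; apply: Lip_le => n m [nt [mt [eq lt]]].
  have Hpm : Hj j (fun i => phi (n i)) (fun i => phi (m i)).
    split; first exact: M1T (T1 n nt).
    split; first exact: M1T (T1 m mt).
    split; last exact: phimono.
    by move=> i ij; rewrite eq.
  apply: (le_trans (g_le _ _ (T1 n nt) (T1 m mt))); rewrite lerD2r.
  exact: (Lip_ub HB _ _ _ Hpm).
have hL0 : forall j, 0 <= Lipj h j := Lip_ge0 hB.
have [M2 [iM2 HM2]] := HC k h hY (ex_intro _ _ hB).
exists (phi @` M2); split.
  apply/unb_infinite; move/unb_infinite: iM2 => uM2 N.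
  have [x [Nx M2x]] := uM2 N; exists (phi x); split; last by exists x.
  apply: (leq_trans Nx).
  by elim: x {Nx M2x} => // x IH; apply: (leq_ltn_trans IH); exact: phimono.
move=> n' m' Hrel.
have [a [a' [Ea [Ea' Hrel']]]] := transfer phimono (Hrel : HCrel b _ n' m').
have hle := HM2 a a' Hrel'.
have [at' at''] := HCrel_tup Hrel'.
have [n'M m'M] := HCrel_tup (Hrel : HCrel b _ n' m').
have n'M1 : in_tuples M1 n' by apply: (in_tuples_sub _ n'M) => x [y _ <-].
have m'M1 : in_tuples M1 m' by apply: (in_tuples_sub _ m'M) => x [y _ <-].
have F1 := f_le _ _ n'M1 m'M1.
have Eh : gY n' - gY m' = h a - h a' by rewrite /h -Ea -Ea'.
rewrite Eh in F1.
set T := (\sum_(j < k) Lipj h j `^ p) `^ p^-1 in hle.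
have T1b : T <= (\sum_(j < k) (Lipj f j + 2 * dl) `^ p) `^ p^-1.
  have pi0 : 0 <= p^-1 by rewrite invr_ge0 ltW.
  rewrite /T; apply: (ge0_ler_powR pi0); rewrite ?nnegrE.
  - by apply: sumr_ge0 => j _; apply: powR_ge0.
  - by apply: sumr_ge0 => j _; apply: powR_ge0.
  apply: ler_sum => j _; apply: powR_mono => //; exact: hL0.
have dl2 : 0 <= 2 * dl by rewrite mulr_ge0 // ltW.
have T2 : (\sum_(j < k) (Lipj f j + 2 * dl) `^ p) `^ p^-1 <=
    (1 + th) * S + k%:R * (1 + th^-1) * (2 * dl).
  rewrite /S; exact: (main_ineq p1 L0 dl2 th0).
have T3 : lam * T <= lam * ((1 + th) * S + k%:R * (1 + th^-1) * (2 * dl)).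
  by apply: ler_wpM2l; [exact: ltW | exact: (le_trans T1b T2)].
have Eq : lam * ((1 + th) * S + k%:R * (1 + th^-1) * (2 * dl)) + 2 * dl = (lam + eps) * S.
  have E1 : lam * ((1 + th) * S) = lam * S + eps * S / 2.
    by rewrite /th; field; rewrite gt_eqF.
  have E2 : lam * (k%:R * (1 + th^-1) * (2 * dl)) + 2 * dl = (2 * dl) * K.
    by rewrite /K; ring.
  have E3 : (2 * dl) * K = eps * S / 2.
    by rewrite /dl; field; rewrite gt_eqF.
  rewrite mulrDr -addrA E2 E3 E1; field; lra.
lra.
Qed.

End Final.

Theorem lemma4p1 (R : realType) (X : completeNormedModType R) (Y : set X)
  (lam p : R) :
  0 < lam -> 1 < p -> closed_subspace Y -> finite_codim Y ->
  (HFC p lam Y -> forall eps : R, 0 < eps -> HFC p (lam + eps) [set: X]) /\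
  (HIC p lam Y -> forall eps : R, 0 < eps -> HIC p (lam + eps) [set: X]).
Proof.
move=> lam0 p1 cY fY; split => H eps eps0.
  exact: (@main_gen R X false lam p Y lam0 p1 cY fY H eps eps0).
exact: (@main_gen R X true lam p Y lam0 p1 cY fY H eps eps0).
Qed.
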